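(* Let $\mathcal{P}$ be a finite set of atomic propositions, let $u \in (2^{\mathcal{P}})^\ast$, $v \in (2^{\mathcal{P}})^+$, let $\rho$ be a regular expression, and let $m$ be the number of states of the minimal deterministic finite automaton over the alphabet $2^{\mathcal{P}}$ recognizing $L(\rho)$. Suppose $uv^\omega[i,j) \vdash \rho$ for some $i, j \in \mathbb{N}$ with $i \le |u| < j$. Then there exists $k \in \mathbb{N}$ with $|u| \le k \le |u| + m|v|$ such that $uv^\omega[i,k) \vdash \rho$ and $k \equiv j \pmod{|v|}$.
   Context: For a word $\alpha = a_0a_1\ldots$ and $i\le j$, $\alpha[i,j) = a_i\ldots a_{j-1}$ and $\alpha[i]=a_i$; $uv^\omega = uvvv\ldots$. Regular expressions: atomic expressions $\xi ::= p \in \mathcal{P} \mid \lnot \xi \mid \xi \lor \xi$, with $[\![p]\!] = \{A \subseteq \mathcal{P} : p \in A\}$, $[\![\lnot\xi]\!] = 2^{\mathcal{P}} \setminus [\![\xi]\!]$, $[\![\xi_1 \lor \xi_2]\!] = [\![\xi_1]\!] \cup [\![\xi_2]\!]$. Regular expressions $\rho ::= \varepsilon \mid \xi \mid \rho + \rho \mid \rho \circ \rho \mid \rho^\ast$. Matching relation on infixes of a word $w$: $w[i,j) \vdash \varepsilon$ iff $j=i$; $w[i,j) \vdash \xi$ iff $j=i+1$ and $w[i] \in [\![\xi]\!]$; $w[i,j)\vdash \rho_1+\rho_2$ iff $w[i,j)\vdash\rho_1$ or $w[i,j)\vdash\rho_2$; $w[i,j)\vdash \rho_1\circ\rho_2$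 iff there is $k\in\{i,\ldots,j\}$ with $w[i,k)\vdash\rho_1$ and $w[k,j)\vdash\rho_2$; $w[i,j)\vdash\rho^\ast$ iff $j=i$ or there is $k\in\{i+1,\ldots,j\}$ with $w[i,k)\vdash\rho$ and $w[k,j)\vdash\rho^\ast$. $L(\rho) = \{ w \in (2^{\mathcal{P}})^\ast : w[0,|w|) \vdash \rho\}$. *)

(* Defs.v *)
From mathcomp Require Import all_boot.
Set Implicit Arguments. Unset Strict Implicit. Unset Printing Implicit Defensive.

Inductive atomic (P : finType) : Type :=
| AProp of P
| ANot of atomic P
| AOr of atomic P & atomic P.

Fixpoint atom_sem (P : finType) (xi : atomic P) (A : {set P}) : bool :=
  match xi with
  | AProp p => p \in A
  | ANot x => ~~ atom_sem x A
  | AOr x y => atom_sem x A || atom_sem y A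
  end.

Inductive regex (P : finType) : Type :=
| REps
| RAtom of atomic P
| RPlus of regex P & regex P
| RCat of regex P & regex P
| RStar of regex P.

Inductive star_rel (R : nat -> nat -> Prop) : nat -> nat -> Prop :=
| star_nil i : star_rel R i i
| star_cons i k j : i < k -> k <= j -> R i k -> star_rel R k j -> star_rel R i j.

(* matches w r i j  <->  w[i,j) |- r, for a (possibly infinite) word w : nat -> 2^P *)
Fixpoint matches (P : finType) (w : nat -> {set P}) (r : regex P) : nat -> nat -> Prop :=
  match r with
  | REps => fun i j => j = i
  | RAtom xi => fun i j => j = i.+1 /\ atom_sem xi (w i)
  | RPlus r1 r2 => fun i j => matches w r1 i j \/ matches w r2 i j
  | RCat r1 r2 => fun i j => exists k, [/\ i <= k, k <= j, matches w r1 i k & matches w r2 k j]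
  | RStar r1 => star_rel (matches w r1)
  end.

(* finite word as a function (positions beyond |w| are never inspected by matches 0 |w|) *)
Definition fword (P : finType) (w : seq {set P}) : nat -> {set P} := fun n => nth set0 w n.

Definition lang (P : finType) (r : regex P) (w : seq {set P}) : Prop :=
  matches (fword w) r 0 (size w).

Definition uvomega (P : finType) (u v : seq {set P}) : nat -> {set P} :=
  fun n => if n < size u then nth set0 u n else nth set0 v ((n - size u) %% size v).

Record dfa (A : finType) := DFA {
  dstate : finType;
  dinit : dstate;
  dtrans : dstate -> A -> dstate;
  dacc : pred dstate }.

Definition dfa_accepts (A : finType) (D : dfa A) (w : seq A) : bool :=
  @dacc A D (foldl (@dtrans A D) (@dinit A D) w).

Definition dfa_recognizes (A : finType) (D : dfa A) (L : seq A -> Prop) : Prop :=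
  forall w, dfa_accepts D w <-> L w.

Definition min_dfa_size (A : finType) (L : seq A -> Prop) (m : nat) : Prop :=
  (exists D : dfa A, dfa_recognizes D L /\ #|@dstate A D| = m) /\
  (forall D : dfa A, dfa_recognizes D L -> m <= #|@dstate A D|).

(* Main.v *)
Require Import Defs.
From mathcomp Require Import all_boot.
From mathcomp Require Import zify.

Lemma matches_le (P : finType) (w : nat -> {set P}) r a b :
  matches w r a b -> a <= b.
Proof.
elim: r a b => [|x|r1 IH1 r2 IH2|r1 IH1 r2 IH2|r1 IH1] a b /=.
- by move=> ->.
- by case=> -> _.
- by case=> [/IH1|/IH2].
- by case=> k [H1 H2 _ _]; apply: leq_trans H2.
- elim=> // i k j H1 H2 _ _ _; lia.
Qed.

Lemma matches_ext (P : finType) (w w' : nat -> {set P}) r :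
  forall a b a' b', b - a = b' - a' -> a <= b -> a' <= b' ->
  (forall n, n < b - a -> w (a+n) = w' (a'+n)) ->
  matches w r a b -> matches w' r a' b'.
Proof.
elim: r => [|x|r1 IH1 r2 IH2|r1 IH1 r2 IH2|r1 IH1] a b a' b' Hd Hab Ha'b' Hw /=.
- move=> Eb; lia.
- case=> Eb Hx; split; first lia.
  have := Hw 0 ltac:(lia); rewrite !addn0 => <-; exact Hx.
- case=> H; [left; exact: (IH1 a b)|right; exact: (IH2 a b)].
- case=> k [H1 H2 M1 M2]; exists (a' + (k - a)); split; first lia; first lia.
  + apply: (IH1 a k) => //; try lia. move=> n Hn; apply: Hw; lia.
  + apply: (IH2 k b) => //; try lia. move=> n Hn.
    have := Hw (k - a + n) ltac:(lia).
    have -> : a + (k - a + n) = k + n by lia.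
    by have -> : a' + (k - a + n) = a' + (k - a) + n by lia.
- move=> Hst; elim: Hst a' b' Hd Hab Ha'b' Hw => [i|i k j Hik Hkj Hr _ IHs] a' b' Hd Hab Ha'b' Hw.
  + have -> : b' = a' by lia. exact: star_nil.
  + apply: (@star_cons _ a' (a' + (k - i)) b'); try lia.
    * apply: (IH1 i k) => //; try lia. move=> n Hn; apply: Hw; lia.
    * apply: IHs; try lia. move=> n Hn.
      have := Hw (k - i + n) ltac:(lia).
      have -> : i + (k - i + n) = k + n by lia.
      by have -> : a' + (k - i + n) = a' + (k - i) + n by lia.
Qed.

Lemma matches_lang (P : finType) (w : nat -> {set P}) r i j : i <= j ->
  matches w r i j <-> lang r (mkseq (fun x => w (i + x)) (j - i)).
Proof.
move=> Hij; rewrite /lang size_mkseq; split.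
- apply: (@matches_ext P w _ r i j 0 (j-i)); try lia. move=> n Hn.
  by rewrite /fword add0n nth_mkseq.
- apply: (@matches_ext P _ w r 0 (j-i) i j); try lia. move=> n Hn.
  rewrite /fword add0n nth_mkseq //; lia.
Qed.
Set Implicit Arguments. Unset Strict Implicit.

Lemma uv_period (P : finType) (u v : seq {set P}) n c :
  size u <= n -> uvomega u v (n + c * size v) = uvomega u v n.
Proof.
move=> Hn; rewrite /uvomega.
have -> : (n + c * size v < size u) = false by apply/negbTE; rewrite -leqNgt; lia.
have -> : (n < size u) = false by apply/negbTE; rewrite -leqNgt.
have -> : n + c * size v - size u = c * size v + (n - size u) by lia.
by rewrite modnMDl.
Qed.

Definition run (A : finType) (D : dfa A) (w : nat -> A) i n :=
  foldl (@dtrans A D) (@dinit A D) (mkseq (fun x => w (i + x)) n).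

Lemma runS (A : finType) (D : dfa A) w i n :
  run D w i n.+1 = dtrans (run D w i n) (w (i + n)).
Proof. by rewrite /run mkseqS foldl_rcons. Qed.

Lemma run_shift (A : finType) (D : dfa A) w i n1 n2 :
  run D w i n1 = run D w i n2 ->
  (forall y, w (i + n1 + y) = w (i + n2 + y)) ->
  forall y, run D w i (n1 + y) = run D w i (n2 + y).
Proof.
move=> E Hw; elim=> [|y IH]; first by rewrite !addn0.
by rewrite !addnS !runS IH !addnA Hw.
Qed.

Lemma eventually (S : finType) (f : nat -> S) m :
  #|S| = m ->
  (forall t1 t2, f t1 = f t2 -> forall x, f (t1 + x) = f (t2 + x)) ->
  forall T, exists2 T', T' < m & f T = f T'.
Proof.
move=> Hm Hsh.
have : ~~ injectiveb (fun t : 'I_m.+1 => f t).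
  apply/negP => /injectiveP Hi; have := @leq_card _ S _ Hi; rewrite card_ord Hm; lia.
case/injectivePn => x [y Hxy Exy].
wlog lt : x y Hxy Exy / x < y.
  move=> Hw; case: (ltngtP x y) => H; first exact: (Hw x y).
  - apply: (Hw y x) => //; by rewrite eq_sym.
  - by move: Hxy; rewrite (val_inj H) eqxx.
have Hy := ltn_ord y.
elim/ltn_ind=> T IH.
case: (ltnP T m) => HT; first by exists T.
have E : f T = f (x + (T - y)).
  have := Hsh _ _ Exy (T - y); have -> : y + (T - y) = T by lia. by [].
have [T' H1 H2] := IH (x + (T - y)) ltac:(lia).
by exists T'; rewrite // E.
Qed.

Theorem lemma2 (P : finType) (u v : seq {set P}) (rho : regex P) (m i j : nat) :
  0 < size v ->
  min_dfa_size (lang rho) m ->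
  i <= size u < j ->
  matches (uvomega u v) rho i j ->
  exists k : nat,
    [/\ size u <= k <= size u + m * size v,
        matches (uvomega u v) rho i k
      & k = j %[mod size v]].
Proof.
move=> Hv [[D [HD Hm]] _] /andP[Hiu Huj] M.
set w := uvomega u v in M *.
set N := size u in Hiu Huj *. set V := size v in Hv *.
set r0 := (j - N) %% V. set T := (j - N) %/ V.
have Hr0 : r0 < V by rewrite ltn_pmod.
have Ej : j - N = T * V + r0 by rewrite /T /r0 -divn_eq.
set base := N + r0 - i.
pose f t := run D w i (base + t * V).
have Hsh : forall t1 t2, f t1 = f t2 -> forall x, f (t1 + x) = f (t2 + x).
  move=> t1 t2 E x; rewrite /f !mulnDl !addnA.
  apply: run_shift => // y.
  case: (leqP t1 t2) => H.
  - have -> : i + (base + t2 * V) + y = i + (base + t1 * V) + y + (t2 - t1) * V.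
      rewrite mulnBl; have := leq_mul H (leqnn V); lia.
    by rewrite /w uv_period //; lia.
  - have -> : i + (base + t1 * V) + y = i + (base + t2 * V) + y + (t1 - t2) * V.
      rewrite mulnBl; have := leq_mul (ltnW H) (leqnn V); lia.
    by rewrite /w uv_period //; lia.
have [T' HT' EfT] := eventually Hm Hsh T.
exists (N + r0 + T' * V).
have Hm0 : 0 < m by lia.
have HT'V : T' * V <= (m - 1) * V by apply: leq_mul => //; lia.
split.
- apply/andP; split; first lia.
  rewrite mulnBl mul1n in HT'V. have : V <= m * V by rewrite leq_pmull. lia.
- have Hik : i <= N + r0 + T' * V by lia.
  apply/(@matches_lang _ _ _ _ _ Hik).
  apply/HD. rewrite /dfa_accepts.
  have -> : N + r0 + T' * V - i = base + T' * V by lia.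
  rewrite -/(run D w i _) -/(f T') -EfT /f.
  have -> : base + T * V = j - i by lia.
  have Hij : i <= j by lia.
  by apply/HD; apply/(@matches_lang _ _ _ _ _ Hij).
- have -> : j = T * V + (N + r0) by lia.
  by rewrite (addnC (N + r0)) !modnMDl.
Qed.
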